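(* Let $\gamma\in F=PSL(2,\mathbb Z)$ be a hyperbolic element (i.e. acting as a hyperbolic isometry of $\mathbb H^2$). Then there exist two sequences $\{U_n^+\}_{n\in\mathbb N}$ and $\{U_n^-\}_{n\in\mathbb N}$ of connected subsets of $B$ such that $\{U_n^+\}$ is a vanishing sequence for the action of $\gamma$ on $B$, $\{U_n^-\}$ is a vanishing sequence for $\gamma^{-1}$, and $U_0^+\cap U_0^-=\emptyset$.
   Context: $B=\mathbb{QP}^1$ is the vertex set of the Farey tessellation of $\mathbb H^2$, with the action of $F=PSL(2,\mathbb Z)$, and $T$ is the dual trivalent tree. A quadribone is the set of four vertices of two adjacent ideal triangles (corresponding to an edge of $T$); $A\subset B$ is connected if it is a union of quadribones whose corresponding edges form a connected subset of $T$. For a map $\gamma:X\to X$ of a topological space (here $X=B$ with the discrete topology), a sequence of non-empty subsets $\{V_n\}$ is a vanishing sequence for $\gamma$ if $V_{n+1}\subset V_n$, $\bigcap_n V_n=\emptyset$, and for every compact $K\subset X$ and every $n$ there exists $p\in\mathbb N$ with $\gamma^p(K)\subset V_n$. *)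

(* Defs.v *)
From mathcomp Require Import all_boot all_order all_algebra.
Set Implicit Arguments. Unset Strict Implicit. Unset Printing Implicit Defensive.
Import Order.TTheory GRing.Theory Num.Theory.
Local Open Scope ring_scope.

(* B = QP^1 : a rational point (Some x) or the point at infinity (None). *)
Definition B := option rat.

(* Reduced homogeneous coordinates (p,q), gcd 1, q > 0, infinity = (1,0). *)
Definition bnum (x : B) : int := if x is Some r then numq r else 1.
Definition bden (x : B) : int := if x is Some r then denq r else 0.

(* The point of QP^1 with homogeneous coordinates (p,q) (assumed not (0,0)). *)
Definition bpt (p q : int) : B :=
  if q == 0 then None else Some (p%:~R / q%:~R).

(* Farey adjacency: x, y span an edge of the Farey tessellation. *)
Definition farey_adj (x y : B) : Prop :=
  `|bnum x * bden y - bnum y * bden x| = 1.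

(* Edges of the Farey tessellation, given as ordered pairs of endpoints;
   each edge of the Farey tessellation is dual to exactly one edge of T. *)
Definition edge := (B * B)%type.
Definition farey_edge (e : edge) : Prop := farey_adj e.1 e.2.

(* Quadribone of a Farey edge {a/b, c/d}: its endpoints plus the third
   vertices (a+c)/(b+d) and (a-c)/(b-d) of the two adjacent ideal triangles. *)
Definition quadribone (e : edge) (z : B) : Prop :=
  z = e.1 \/ z = e.2 \/
  z = bpt (bnum e.1 + bnum e.2) (bden e.1 + bden e.2) \/
  z = bpt (bnum e.1 - bnum e.2) (bden e.1 - bden e.2).

(* Two edges of T are adjacent (share a vertex of T, i.e. an ideal triangle)
   iff the dual Farey edges are two distinct sides of one Farey triangle. *)
Definition T_adj (e f : edge) : Prop :=
  exists x y z : B, [/\ farey_adj x y, farey_adj x z, farey_adj y z & y <> z] /\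
    (e = (x, y) \/ e = (y, x)) /\ (f = (x, z) \/ f = (z, x)).

Inductive T_chain (E : edge -> Prop) : edge -> edge -> Prop :=
| T_chain_refl e : E e -> T_chain E e e
| T_chain_step e f g : T_chain E e f -> E g -> T_adj f g -> T_chain E e g.

Definition T_connected (E : edge -> Prop) : Prop :=
  (forall e, E e -> farey_edge e) /\ (forall e f, E e -> E f -> T_chain E e f).

Definition connectedB (A : B -> Prop) : Prop :=
  exists E : edge -> Prop, T_connected E /\
    (forall z, A z <-> exists e, E e /\ quadribone e z).

Definition mobius (a b c d : int) (x : B) : B :=
  bpt (a * bnum x + b * bden x) (c * bnum x + d * bden x).

(* Vanishing sequence for gam : B -> B, B discrete: compact = finite,
   a finite subset being given by a list of its elements. *)
Definition vanishing (gam : B -> B) (V : nat -> B -> Prop) : Prop :=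
  [/\ (forall n, exists x, V n x),
      (forall n x, V n.+1 x -> V n x),
      (forall x, ~ (forall n, V n x)) &
      (forall (K : seq B) (n : nat), exists p : nat,
          (0 < p)%N /\ forall x, x \in K -> V n (iter p gam x))].

(* Main.v *)
Require Import Defs.
From mathcomp Require Import all_boot all_order all_algebra.
From mathcomp Require Import zify.
From mathcomp.algebra_tactics Require Import ring.
From Stdlib Require Import FunctionalExtensionality Classical.
Import Order.TTheory GRing.Theory Num.Theory.
Local Open Scope ring_scope.


Lemma unit_int (k t : int) : k * t = 1 \/ k * t = -1 -> k = 1 \/ k = -1.
Proof. move=> H.
have : (k <= -2 \/ k = -1 \/ k = 0 \/ k = 1 \/ 2 <= k) by lia.
have : (t <= -1 \/ t = 0 \/ 1 <= t) by lia.
move=> [?|[?|?]] [?|[?|[?|[?|?]]]]; subst; try nia. Qed.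

Lemma bpt_vec x : bpt (bnum x) (bden x) = x.
Proof.
case: x => [r|] //=; rewrite /bpt (negbTE (denq_neq0 r)).
by rewrite divq_num_den.
Qed.

Lemma bden_ge0 x : 0 <= bden x.
Proof. case: x => [r|] //=; exact: ltW (denq_gt0 r). Qed.

Lemma bden0 x : bden x = 0 -> bnum x = 1.
Proof. case: x => [r|] //= H. by move: (denq_neq0 r); rewrite H. Qed.

Lemma bpt_scale k p q : k != 0 -> bpt (k * p) (k * q) = bpt p q.
Proof.
move=> kn; rewrite /bpt mulf_eq0 (negbTE kn) /=.
case: (q == 0) /eqP => // qn0; congr Some.
have qn : (q%:~R : rat) != 0 by rewrite intr_eq0; apply/eqP.
have kn' : (k%:~R : rat) != 0 by rewrite intr_eq0.
rewrite !intrM; field.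
by rewrite qn kn'.
Qed.

Lemma bpt_vecK p q : (p != 0) \/ (q != 0) ->
  exists k, k != 0 /\ p = k * bnum (bpt p q) /\ q = k * bden (bpt p q).
Proof.
move=> H; rewrite /bpt; case: (q =P 0) H => [->|qn0] H /=.
  exists p; case: H => [H|/eqP//]; split => //; split; ring.
set r := (p%:~R / q%:~R : rat).
have qn : (q%:~R : rat) != 0 by rewrite intr_eq0; apply/eqP.
have E : numq r * q = p * denq r.
  apply: (@intr_inj rat); rewrite !intrM numqE /r.
  by field.
have : (denq r %| q * numq r)%Z by apply/dvdzP; exists (p); rewrite mulrC E mulrC.
rewrite Gauss_dvdzl; last by rewrite coprimezE coprime_sym coprime_num_den.
case/dvdzP => k Hk.
have dn := denq_neq0 r.
have pk : p = k * numq r.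
  apply: (mulIf dn); rewrite -E Hk; ring.
exists k; split; last by split.
by apply/eqP => k0; apply: qn0; rewrite Hk k0 mul0r.
Qed.

Lemma partner x : exists r s, bnum x * s - bden x * r = 1.
Proof.
case: x => [x|] /=; last by exists 0, 1; ring.
have : coprimez (numq x) (denq x) by rewrite coprimezE coprime_num_den.
case/coprimezP => [[u v]] /= H.
exists (- v), u; rewrite -H; ring.
Qed.

Definition unimod (a b c d : int) := a* d - b* c = 1 \/ a* d - b* c = -1.

Lemma vec_mob a b c d x : unimod a b c d ->
  exists e, (e = 1 \/ e = -1) /\
    a * bnum x + b * bden x = e * bnum (mobius a b c d x) /\
    c * bnum x + d * bden x = e * bden (mobius a b c d x).
Proof.
move=> U.
set p := bnum x; set q := bden x.
have nz : (a * p + b * q != 0) \/ (c * p + d * q != 0).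
  case: (a * p + b * q =P 0) => H1; last by left; apply/eqP.
  case: (c * p + d * q =P 0) => H2; last by right; apply/eqP.
  exfalso.
  have Hp : (a* d - b* c) * p = 0.
    transitivity (d * (a* p+b* q) - b * (c* p+d* q)); first ring.
    by rewrite H1 H2; ring.
  have Hq : (a* d - b* c) * q = 0.
    transitivity (a * (c* p+d* q) - c * (a* p+b* q)); first ring.
    by rewrite H1 H2; ring.
  have : q = 0 by case: U => U; move: Hq; rewrite U; lia.
  move=> q0. have := @bden0 x q0. rewrite -/p.
  case: U => U; move: Hp; rewrite U; lia.
have [k [kn [E1 E2]]] := @bpt_vecK _ _ nz.
have [r [s Hrs]] := @partner x.
rewrite -/p -/q in Hrs.
exists k; split; last first.
  by rewrite /mobius -/p -/q.
apply: (@unit_int k (bnum (mobius a b c d x) * (c* r+d* s) - bden (mobius a b c d x) * (a* r+b* s))).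
rewrite /mobius -/p -/q.
have -> : k * (bnum (bpt (a * p + b * q) (c * p + d * q)) * (c * r + d * s) -
     bden (bpt (a * p + b * q) (c * p + d * q)) * (a * r + b * s))
  = (k * bnum (bpt (a * p + b * q) (c * p + d * q))) * (c * r + d * s) -
     (k * bden (bpt (a * p + b * q) (c * p + d * q))) * (a * r + b * s) by ring.
rewrite -E1 -E2.
have -> : (a * p + b * q) * (c * r + d * s) - (c * p + d * q) * (a * r + b * s)
  = (a* d - b* c) * (p * s - q * r) by ring.
rewrite Hrs mulr1; exact: U.
Qed.


Lemma bptN p q : bpt (- p) (- q) = bpt p q.
Proof.
have -> : - p = (-1) * p by ring.
have -> : - q = (-1) * q by ring.
by apply: bpt_scale.
Qed.

Lemma mob_bpt a b c d p q : (p != 0) \/ (q != 0) ->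
  mobius a b c d (bpt p q) = bpt (a * p + b * q) (c * p + d * q).
Proof.
move=> nz; have [k [kn [E1 E2]]] := @bpt_vecK _ _ nz.
rewrite /mobius; set P := bpt p q in E1 E2 *.
rewrite [in RHS]E1 [in RHS]E2.
have -> : a * (k * bnum P) + b * (k * bden P) =
   k * (a * bnum P + b * bden P) by ring.
have -> : c * (k * bnum P) + d * (k * bden P) =
   k * (c * bnum P + d * bden P) by ring.
by rewrite bpt_scale.
Qed.

Lemma bpt_sgn e p q : e = 1 \/ e = -1 -> bpt (e * p) (e * q) = bpt p q.
Proof. by case=> ->; rewrite ?mul1r // !mulN1r bptN. Qed.

Lemma mob_comp a1 b1 c1 d1 a2 b2 c2 d2 x : unimod a2 b2 c2 d2 ->
  mobius a1 b1 c1 d1 (mobius a2 b2 c2 d2 x) =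
  mobius (a1 * a2 + b1 * c2) (a1 * b2 + b1 * d2) (c1 * a2 + d1 * c2) (c1 * b2 + d1 * d2) x.
Proof.
move=> U; have [e [He [E1 E2]]] := @vec_mob _ _ _ _ x U.
rewrite [in RHS]/mobius.
set u := mobius a2 b2 c2 d2 x.
have -> : (a1 * a2 + b1 * c2) * bnum x + (a1 * b2 + b1 * d2) * bden x
   = e * (a1 * bnum u + b1 * bden u).
  transitivity (a1 * (a2 * bnum x + b2 * bden x) + b1 * (c2 * bnum x + d2 * bden x)); first ring.
  rewrite E1 E2; ring.
have -> : (c1 * a2 + d1 * c2) * bnum x + (c1 * b2 + d1 * d2) * bden x
   = e * (c1 * bnum u + d1 * bden u).
  transitivity (c1 * (a2 * bnum x + b2 * bden x) + d1 * (c2 * bnum x + d2 * bden x)); first ring.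
  rewrite E1 E2; ring.
by rewrite bpt_sgn.
Qed.

Lemma mob_id x : mobius 1 0 0 1 x = x.
Proof. rewrite /mobius !mul1r !mul0r addr0 add0r; exact: bpt_vec. Qed.

Lemma mob_scale k a b c d x : k != 0 ->
  mobius (k * a) (k * b) (k * c) (k * d) x = mobius a b c d x.
Proof.
move=> kn; rewrite /mobius.
have -> : k * a * bnum x + k * b * bden x = k * (a * bnum x + b * bden x) by ring.
have -> : k * c * bnum x + k * d * bden x = k * (c * bnum x + d * bden x) by ring.
by rewrite bpt_scale.
Qed.

Lemma mob_adj a b c d x y : unimod a b c d -> farey_adj x y ->
  farey_adj (mobius a b c d x) (mobius a b c d y).
Proof.
move=> U; rewrite /farey_adj => H.
have [e1 [He1 [E1 E2]]] := @vec_mob _ _ _ _ x U.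
have [e2 [He2 [F1 F2]]] := @vec_mob _ _ _ _ y U.
set u := mobius a b c d x in E1 E2 *. set w := mobius a b c d y in F1 F2 *.
have K : e1 * e2 * (bnum u * bden w - bnum w * bden u) =
   (a * d - b * c) * (bnum x * bden y - bnum y * bden x).
  transitivity ((e1 * bnum u) * (e2 * bden w) - (e2 * bnum w) * (e1 * bden u)); first ring.
  rewrite -E1 -E2 -F1 -F2; ring.
move: K H; case: U => ->; case: He1 => ->; case: He2 => ->; lia.
Qed.

Lemma adj_nz x y : farey_adj x y ->
  (bnum x + bnum y != 0) \/ (bden x + bden y != 0).
Proof.
rewrite /farey_adj => H.
case: (bnum x + bnum y =P 0) => h1; last by left; apply/eqP.
case: (bden x + bden y =P 0) => h2; last by right; apply/eqP.
exfalso; have E1 : bnum y = - bnum x by lia.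
have E2 : bden y = - bden x by lia.
move: H; rewrite E1 E2.
have -> : bnum x * - bden x - - bnum x * bden x = 0 by ring.
by [].
Qed.

Lemma adj_nz' x y : farey_adj x y ->
  (bnum x - bnum y != 0) \/ (bden x - bden y != 0).
Proof.
rewrite /farey_adj => H.
case: (bnum x - bnum y =P 0) => h1; last by left; apply/eqP.
case: (bden x - bden y =P 0) => h2; last by right; apply/eqP.
exfalso; have E1 : bnum y = bnum x by lia.
have E2 : bden y = bden x by lia.
move: H; rewrite E1 E2.
have -> : bnum x * bden x - bnum x * bden x = 0 by ring.
by [].
Qed.

Lemma mob_quad a b c d e z : unimod a b c d -> farey_adj e.1 e.2 ->
  quadribone e z ->
  quadribone (mobius a b c d e.1, mobius a b c d e.2) (mobius a b c d z).
Proof.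
case: e => x y /= U H.
have [e1 [He1 [E1 E2]]] := @vec_mob _ _ _ _ x U.
have [e2 [He2 [F1 F2]]] := @vec_mob _ _ _ _ y U.
set u := mobius a b c d x in E1 E2 *. set w := mobius a b c d y in F1 F2 *.
rewrite /quadribone /=.
have key : forall s, s = 1 \/ s = -1 ->
  mobius a b c d (bpt (bnum x + s * bnum y) (bden x + s * bden y)) =
  bpt (bnum u + (s * e1 * e2) * bnum w) (bden u + (s * e1 * e2) * bden w).
  move=> s Hs.
  have nz : (bnum x + s * bnum y != 0) \/ (bden x + s * bden y != 0).
    by case: Hs => ->; rewrite ?mul1r ?mulN1r; [exact: adj_nz|exact: adj_nz'].
  rewrite mob_bpt //.
  have -> : a * (bnum x + s * bnum y) + b * (bden x + s * bden y) =
     e1 * (bnum u + s * e1 * e2 * bnum w).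
    transitivity ((a * bnum x + b * bden x) + s * (a * bnum y + b * bden y)); first ring.
    rewrite E1 F1. case: He1 => ->; ring.
  have -> : c * (bnum x + s * bnum y) + d * (bden x + s * bden y) =
     e1 * (bden u + s * e1 * e2 * bden w).
    transitivity ((c * bnum x + d * bden x) + s * (c * bnum y + d * bden y)); first ring.
    rewrite E2 F2. case: He1 => ->; ring.
  by rewrite bpt_sgn.
have k1 := key 1 (or_introl erefl).
have k2 := key (-1) (or_intror erefl).
rewrite !mul1r in k1. rewrite !mulN1r in k2. rewrite -!/(_ - _) in k2.
case=> [->|[->|[->|->]]]; [by left|by right; left| |].
- right; right; rewrite k1.
  case: He1 => ->; case: He2 => ->; rewrite ?mulr1 ?mul1r ?mulN1r ?mulrN1 ?opprK;
   by [left | right].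
- right; right; rewrite -!/(_ - _) k2.
  case: He1 => ->; case: He2 => ->; rewrite ?mulr1 ?mul1r ?mulN1r ?mulrN1 ?opprK;
   by [left | right].
Qed.


Section Transport.
Variables (g h : B -> B).
Hypothesis ghK : forall x, g (h x) = x.
Hypothesis hgK : forall x, h (g x) = x.
Hypothesis h_adj : forall x y, farey_adj x y -> farey_adj (h x) (h y).
Hypothesis g_adj : forall x y, farey_adj x y -> farey_adj (g x) (g y).
Hypothesis h_quad : forall e z, farey_adj e.1 e.2 -> quadribone e z ->
  quadribone (h e.1, h e.2) (h z).
Hypothesis g_quad : forall e z, farey_adj e.1 e.2 -> quadribone e z ->
  quadribone (g e.1, g e.2) (g z).

Definition hE (e : edge) : edge := (h e.1, h e.2).

Lemma T_adj_tr e f : T_adj e f -> T_adj (hE e) (hE f).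
Proof.
case=> x [y [z [[Hxy Hxz Hyz Nyz] [He Hf]]]].
exists (h x), (h y), (h z); split.
  split; try exact: h_adj.
  by move=> E; apply: Nyz; rewrite -(ghK y) -(ghK z) E.
by split; [case: He => ->; [left|right] | case: Hf => ->; [left|right]].
Qed.

Lemma conn_tr (A : B -> Prop) : connectedB A -> connectedB (fun z => A (g z)).
Proof.
case=> E [[HE1 HE2] HA].
pose E' (e : edge) := E (g e.1, g e.2).
have E'h : forall e, E e -> E' (hE e).
  by case=> x y; rewrite /E' /hE /= !ghK.
have ch : forall e f, T_chain E e f -> T_chain E' (hE e) (hE f).
  move=> e f; elim=> [e0 He0|e0 f0 g0 _ IH Hg Ha].
    by apply: T_chain_refl; apply: E'h.
  apply: T_chain_step; [exact: IH | exact: E'h | exact: T_adj_tr Ha].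
have hgE : forall e, hE (g e.1, g e.2) = e by case=> x y; rewrite /hE /= !hgK.
exists E'; split; first split.
- move=> [x y] /HE1; rewrite /farey_edge /= => H.
  by have := @h_adj _ _ H; rewrite !hgK.
- move=> e f He Hf; have := ch _ _ (HE2 _ _ He Hf); by rewrite !hgE.
- move=> z; split.
    case/HA => e [He Hq]; exists (hE e); split; first exact: E'h.
    by rewrite -(hgK z); apply: h_quad => //; exact: HE1.
  case=> e [He Hq]; apply/HA; exists (g e.1, g e.2); split => //.
  apply: g_quad => //.
  by have := HE1 _ He; rewrite /farey_edge /= => H; have := @h_adj _ _ H; rewrite !hgK.
Qed.
End Transport.

Lemma iter_tr (g h f f' : B -> B) (ghK : forall x, g (h x) = x)
  (hgK : forall x, h (g x) = x) (Hf : forall x, f' x = g (f (h x))) p x :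
  iter p f' x = g (iter p f (h x)).
Proof.
elim: p => [|p IH] /=; first by rewrite ghK.
by rewrite Hf IH hgK.
Qed.

Lemma hiter_tr (g h f f' : B -> B) (ghK : forall x, g (h x) = x)
  (hgK : forall x, h (g x) = x)
  (Hf : forall x, f' x = g (f (h x))) p x :
  h (iter p f' x) = iter p f (h x).
Proof. by rewrite (@iter_tr g h f f' ghK hgK Hf) hgK. Qed.

Lemma vanish_tr (g h f f' : B -> B) V :
  (forall x, g (h x) = x) -> (forall x, h (g x) = x) ->
  (forall x, f' x = g (f (h x))) ->
  vanishing f V -> vanishing f' (fun n z => V n (h z)).
Proof.
move=> ghK hgK Hf [V1 V2 V3 V4]; split.
- move=> n; have [x Hx] := V1 n; exists (g x); by rewrite hgK.
- by move=> n x; apply: V2.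
- by move=> x; apply: V3.
- move=> K n; have [p [p0 Hp]] := V4 (map h K) n.
  exists p; split => // x xK.
  rewrite (@hiter_tr g h f f' ghK hgK Hf); apply: Hp; exact: map_f.
Qed.

Definition Goal (a b c d : int) : Prop :=
  exists Up Um : nat -> B -> Prop,
    (forall n, connectedB (Up n)) /\ (forall n, connectedB (Um n)) /\
    vanishing (mobius a b c d) Up /\
    vanishing (mobius d (- b) (- c) a) Um /\
    (forall x, ~ (Up 0%N x /\ Um 0%N x)).

Lemma goal_conj (a b c d a' b' c' d' : int) (g h : B -> B) :
  (forall x, g (h x) = x) -> (forall x, h (g x) = x) ->
  (forall A, connectedB A -> connectedB (fun z => A (h z))) ->
  (forall x, mobius a' b' c' d' x = h (mobius a b c d (g x))) ->
  (forall x, mobius d' (- b') (- c') a' x = h (mobius d (- b) (- c) a (g x))) ->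
  Goal a' b' c' d' -> Goal a b c d.
Proof.
move=> ghK hgK hc H1 H2 [Up [Um [C1 [C2 [V1 [V2 D]]]]]].
exists (fun n z => Up n (h z)), (fun n z => Um n (h z)).
split; first by move=> n; apply: hc.
split; first by move=> n; apply: hc.
split.
  apply: (@vanish_tr g h _ _ _ ghK hgK _ V1) => x; by rewrite H1 !ghK.
split.
  apply: (@vanish_tr g h _ _ _ ghK hgK _ V2) => x; by rewrite H2 !ghK.
by move=> x; apply: D.
Qed.

Lemma mob_ext a b c d a' b' c' d' x : a = a' -> b = b' -> c = c' -> d = d' ->
  mobius a b c d x = mobius a' b' c' d' x.
Proof. by move=> -> -> -> ->. Qed.

Lemma mob_inv a b c d a' b' c' d' x : unimod a b c d ->
  a' * a + b' * c = 1 -> a' * b + b' * d = 0 -> c' * a + d' * c = 0 -> c' * b + d' * d = 1 ->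
  mobius a' b' c' d' (mobius a b c d x) = x.
Proof.
move=> U h1 h2 h3 h4; rewrite mob_comp // h1 h2 h3 h4; exact: mob_id.
Qed.

Lemma conn_mob a b c d a' b' c' d' (A : B -> Prop) :
  unimod a b c d -> unimod a' b' c' d' ->
  (forall x, mobius a' b' c' d' (mobius a b c d x) = x) ->
  (forall x, mobius a b c d (mobius a' b' c' d' x) = x) ->
  connectedB A -> connectedB (fun z => A (mobius a b c d z)).
Proof.
move=> U U' K1 K2; apply: (@conn_tr _ (mobius a' b' c' d')) => //;
  move=> *; by [apply: mob_adj | apply: mob_quad].
Qed.

Lemma unimod_mul a1 b1 c1 d1 a2 b2 c2 d2 : unimod a1 b1 c1 d1 -> unimod a2 b2 c2 d2 ->
  unimod (a1 * a2 + b1 * c2) (a1 * b2 + b1 * d2) (c1 * a2 + d1 * c2) (c1 * b2 + d1 * d2).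
Proof.
rewrite /unimod => U1 U2.
have -> : (a1 * a2 + b1 * c2) * (c1 * b2 + d1 * d2) - (a1 * b2 + b1 * d2) * (c1 * a2 + d1 * c2)
  = (a1 * d1 - b1 * c1) * (a2 * d2 - b2 * c2) by ring.
by case: U1 => ->; case: U2 => ->; rewrite ?mul1r ?mulN1r ?opprK; [left|right|right|left].
Qed.

Ltac conj_tac :=
  move=> x; rewrite [in RHS]mob_comp //; rewrite [in RHS]mob_comp;
  [apply: mob_ext; ring | by [] ].

Lemma unimod_adj a b c d : unimod a b c d -> unimod d (- b) (- c) a.
Proof. rewrite /unimod; have -> : d * a - - b * - c = a * d - b * c by ring. by []. Qed.

Lemma goal_J a b c d : unimod a b c d -> Goal a (- b) (- c) d -> Goal a b c d.
Proof.
move=> UM; have UM' := @unimod_adj _ _ _ _ UM.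
have U : unimod 1 0 0 (-1) by right; ring.
have K : forall x, mobius 1 0 0 (-1) (mobius 1 0 0 (-1) x) = x.
  by move=> x; apply: mob_inv => //; ring.
apply: (@goal_conj _ _ _ _ _ _ _ _ (mobius 1 0 0 (-1)) (mobius 1 0 0 (-1))) => //.
- by move=> A; apply: (@conn_mob 1 0 0 (-1) 1 0 0 (-1)).
- conj_tac.
- conj_tac.
Qed.

Lemma goal_W a b c d : unimod a b c d -> Goal d c b a -> Goal a b c d.
Proof.
move=> UM; have UM' := @unimod_adj _ _ _ _ UM.
have U : unimod 0 1 1 0 by right; ring.
have K : forall x, mobius 0 1 1 0 (mobius 0 1 1 0 x) = x.
  by move=> x; apply: mob_inv => //; ring.
apply: (@goal_conj _ _ _ _ _ _ _ _ (mobius 0 1 1 0) (mobius 0 1 1 0)) => //.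
- by move=> A; apply: (@conn_mob 0 1 1 0 0 1 1 0).
- conj_tac.
- conj_tac.
Qed.

Lemma goal_T k a b c d : unimod a b c d ->
  Goal (a - k * c) (b + k * (a - d) - k * k * c) c (d + k * c) -> Goal a b c d.
Proof.
move=> UM; have UM' := @unimod_adj _ _ _ _ UM.
have U : unimod 1 k 0 1 by left; ring.
have U' : unimod 1 (-k) 0 1 by left; ring.
have K1 : forall x, mobius 1 (-k) 0 1 (mobius 1 k 0 1 x) = x.
  by move=> x; apply: mob_inv => //; ring.
have K2 : forall x, mobius 1 k 0 1 (mobius 1 (-k) 0 1 x) = x.
  by move=> x; apply: mob_inv => //; ring.
apply: (@goal_conj _ _ _ _ _ _ _ _ (mobius 1 k 0 1) (mobius 1 (-k) 0 1)) => //.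
- by move=> A; apply: (@conn_mob 1 (-k) 0 1 1 k 0 1).
- conj_tac.
- conj_tac.
Qed.

Lemma goal_neg a b c d : Goal (- a) (- b) (- c) (- d) -> Goal a b c d.
Proof.
have e : forall a b c d, mobius (- a) (- b) (- c) (- d) = mobius a b c d.
  move=> a' b' c' d'; apply: functional_extensionality => x.
  rewrite -(@mob_scale (-1) a' b' c' d') //; apply: mob_ext; ring.
by rewrite /Goal !e.
Qed.

Lemma parent (p1 q1 p2 q2 : int) : 0 <= p1 -> 0 <= q1 -> 0 <= p2 -> 0 <= q2 ->
  p1 * q2 - p2 * q1 = 1 \/ p1 * q2 - p2 * q1 = -1 ->
  ~ (q1 = 0 /\ p2 = 0) -> ~ (p1 = 0 /\ q2 = 0) ->
  (p2 <= p1 /\ q2 <= q1) \/ (p1 <= p2 /\ q1 <= q2).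
Proof.
move=> h1 h2 h3 h4 hD n1 n2.
case: (lerP p2 p1) => a1; case: (lerP q2 q1) => a2.
- by left.
- have H : p1 * (q2 - q1) <= p1 * q2 - p2 * q1 by nia.
  case: hD => hD; last by exfalso; nia.
  have Hp1 : p1 <= 1 by nia.
  have : p1 = 0 \/ p1 = 1 by lia. case=> e; subst p1.
  + have : p2 = 0 by lia. move=> ?; subst p2; lia.
  + have : p2 = 0 \/ p2 = 1 by lia. case=> e; subst p2.
    * have : q1 = 0 by nia. move=> ?; subst q1. by exfalso; apply: n1.
    * right; lia.
- have H : q1 * (p2 - p1) <= p2 * q1 - p1 * q2 by nia.
  case: hD => hD; first by exfalso; nia.
  have Hq1 : q1 <= 1 by nia.
  have : q1 = 0 \/ q1 = 1 by lia. case=> e; subst q1.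
  + have : q2 = 0 by lia. move=> ?; subst q2; lia.
  + have : q2 = 0 \/ q2 = 1 by lia. case=> e; subst q2.
    * have : p1 = 0 by nia. move=> ?; subst p1. by exfalso; apply: n2.
    * right; lia.
- right; lia.
Qed.

Lemma exact_int (k n d p q : int) : 0 <= p -> 0 <= q -> 0 <= d -> (d = 0 -> n = 1) ->
  p = k * n -> q = k * d -> (k = 1 \/ k = -1) -> n = p /\ d = q.
Proof.
move=> hp hq hd h0 E1 E2 [] ku; subst k; rewrite ?mul1r ?mulN1r in E1 E2; first by split.
exfalso; have d0 : d = 0 by lia.
have := h0 d0; lia.
Qed.

Lemma exact_vec p q r s : 0 <= p -> 0 <= q ->
  p * s - q * r = 1 \/ p * s - q * r = -1 ->
  bnum (bpt p q) = p /\ bden (bpt p q) = q.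
Proof.
move=> hp hq hD.
have nz : (p != 0) \/ (q != 0).
  case: (p =P 0) => [p0|/eqP]; last by left.
  case: (q =P 0) => [q0|/eqP]; last by right.
  by exfalso; move: hD; rewrite p0 q0 !mul0r subr0; case=> h; discriminate h.
have [k [kn [E1 E2]]] := @bpt_vecK _ _ nz.
have hb := bden_ge0 (bpt p q); have h0 := @bden0 (bpt p q).
set P := bpt p q in E1 E2 hb h0 *.
have ku : k = 1 \/ k = -1.
  apply: (@unit_int k (bnum P * s - bden P * r)).
  have -> : k * (bnum P * s - bden P * r) = p * s - q * r.
    by rewrite [in RHS]E1 [in RHS]E2; ring.
  exact: hD.
exact: exact_int hp hq hb h0 E1 E2 ku.
Qed.

Lemma nonneg_int (k n d p q : int) : 0 <= p -> 0 <= q -> 0 <= d -> (d = 0 -> n = 1) ->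
  p = k * n -> q = k * d -> k != 0 -> 0 <= n.
Proof.
move=> hp hq hd h0 E1 E2 kn.
case: (d =P 0) => [/h0 ->//|dn].
have dp : 0 < d by lia.
case: (ltrP 0 k) => hk; first nia.
exfalso; have : k < 0 by lia. nia.
Qed.

Lemma nonneg_bpt p q : 0 <= p -> 0 <= q -> (p != 0) \/ (q != 0) -> 0 <= bnum (bpt p q).
Proof.
move=> hp hq nz.
have [k [kn [E1 E2]]] := @bpt_vecK _ _ nz.
exact: nonneg_int hp hq (bden_ge0 _) (@bden0 _) E1 E2 kn.
Qed.

Lemma nonpos_bpt p q : p <= 0 -> q <= 0 -> (p != 0) \/ (q != 0) -> 0 <= bnum (bpt p q).
Proof.
move=> hp hq nz; rewrite -bptN; apply: nonneg_bpt; try lia.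
Qed.

Lemma vec_inj x y : bnum x = bnum y -> bden x = bden y -> x = y.
Proof. by move=> h1 h2; rewrite -(bpt_vec x) -(bpt_vec y) h1 h2. Qed.

Definition EP (e : edge) : Prop := farey_adj e.1 e.2 /\ 0 <= bnum e.1 /\ 0 <= bnum e.2 /\
  ~ (bden e.1 = 0 /\ bnum e.2 = 0) /\ ~ (bnum e.1 = 0 /\ bden e.2 = 0).

Lemma T_adj_sym e f : T_adj e f -> T_adj f e.
Proof.
case=> x [y [z [[h1 h2 h3 h4] [he hf]]]].
exists x, z, y; split; last by split.
split => //.
  move: h3; rewrite /farey_adj => h; lia.
by move=> E; apply: h4.
Qed.

Lemma chain_src E e f : T_chain E e f -> E e.
Proof. by elim. Qed.

Lemma chain_trans E e f g : T_chain E e f -> T_chain E f g -> T_chain E e g.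
Proof.
move=> H1 H2; elim: H2 H1 => // f0 g0 h0 _ IH Eh Ha H1.
exact: T_chain_step (IH H1) Eh Ha.
Qed.

Lemma chain_sym E e f : T_chain E e f -> T_chain E f e.
Proof.
elim=> [e0 He|e0 f0 g0 H IH Eg Ha]; first exact: T_chain_refl.
exact: (@chain_trans _ _ _ _ (T_chain_step (T_chain_refl Eg) (@chain_src _ _ _ IH) (@T_adj_sym _ _ Ha)) IH).
Qed.

Definition one : B := Some 1.
Definition zero : B := Some 0.
Definition inf : B := None.

Lemma one_vec : bnum one = 1 /\ bden one = 1. Proof. by []. Qed.
Lemma zero_vec : bnum zero = 0 /\ bden zero = 1. Proof. by []. Qed.

Lemma E_one_inf : EP (one, inf).
Proof. by rewrite /EP /farey_adj /=; split; [|split; [|split; [|split]]] => //; case. Qed.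
Lemma E_one_zero : EP (one, zero).
Proof. by rewrite /EP /farey_adj /=; split; [|split; [|split; [|split]]] => //; case. Qed.
Lemma E_inf_one : EP (inf, one).
Proof. by rewrite /EP /farey_adj /=; split; [|split; [|split; [|split]]] => //; case. Qed.
Lemma E_zero_one : EP (zero, one).
Proof. by rewrite /EP /farey_adj /=; split; [|split; [|split; [|split]]] => //; case. Qed.

Lemma adj_basic x y : x <> y -> farey_adj x y ->
  True.
Proof. by []. Qed.

Lemma adj_oi : farey_adj one inf. Proof. by rewrite /farey_adj. Qed.
Lemma adj_oz : farey_adj one zero. Proof. by rewrite /farey_adj. Qed.
Lemma adj_iz : farey_adj inf zero. Proof. by rewrite /farey_adj. Qed.
Lemma adj_zi : farey_adj zero inf. Proof. by rewrite /farey_adj. Qed.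

Lemma chain_base_oz : T_chain EP (one, inf) (one, zero).
Proof.
apply: T_chain_step (T_chain_refl E_one_inf) E_one_zero _.
exists one, inf, zero; split; last by split; left.
by split; [exact: adj_oi|exact: adj_oz|exact: adj_iz|].
Qed.

Lemma chain_base_io : T_chain EP (one, inf) (inf, one).
Proof.
apply: T_chain_step chain_base_oz E_inf_one _.
exists one, zero, inf; split; last by split; [left|right].
by split; [exact: adj_oz|exact: adj_oi|exact: adj_zi|].
Qed.

Lemma chain_base_zo : T_chain EP (one, inf) (zero, one).
Proof.
apply: T_chain_step (T_chain_refl E_one_inf) E_zero_one _.
exists one, inf, zero; split; last by split; [left|right].
by split; [exact: adj_oi|exact: adj_oz|exact: adj_iz|].
Qed.

Lemma adj_D x y : farey_adj x y ->
  bnum x * bden y - bnum y * bden x = 1 \/ bnum x * bden y - bnum y * bden x = -1.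
Proof. rewrite /farey_adj; lia. Qed.

Lemma vec_pos x : 0 <= bnum x -> 1 <= bnum x + bden x.
Proof.
move=> h; have := bden_ge0 x; have := @bden0 x.
case: (bden x =P 0) => [e|e] h1 h2; first by rewrite h1 // e.
lia.
Qed.

Lemma chain_all (N : nat) : forall e, EP e ->
  bnum e.1 + bden e.1 + bnum e.2 + bden e.2 <= N%:Z -> T_chain EP (one, inf) e.
Proof.
elim: N => [|N IH] [x y] He /=.
  case: He => _ [h1 [h2 _]] /= hs; simpl in h1, h2.
  have := @vec_pos _ h1; have := @vec_pos _ h2; move=> *; exfalso; lia.
case: (He) => /= Ha [h1 [h2 [n1 n2]]] hs; simpl in Ha, h1, h2, n1, n2.
have hq1 := bden_ge0 x; have hq2 := bden_ge0 y.
have hD := @adj_D _ _ Ha.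
have nx := @vec_pos _ h1; have ny := @vec_pos _ h2.
case: (@parent _ _ _ _ h1 hq1 h2 hq2 hD n1 n2) => [[c1 c2]|[c1 c2]].
-
  set w := bpt (bnum x - bnum y) (bden x - bden y).
  have [w1 w2] : bnum w = bnum x - bnum y /\ bden w = bden x - bden y.
    apply: (@exact_vec _ _ (bnum y) (bden y)); try lia.
  have Tad : T_adj (w, y) (x, y).
    exists y, w, x; split; last by split; right.
    split.
    + rewrite /farey_adj w1 w2. lia.
    + rewrite /farey_adj. lia.
    + rewrite /farey_adj w1 w2. lia.
    + move=> E; have : bnum w = bnum x by rewrite E.
      have : bden w = bden x by rewrite E.
      rewrite w1 w2; lia.
  case: (classic (EP (w, y))) => Hf.
    apply: T_chain_step (IH _ Hf _) He Tad => /=; lia.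
  have ex : (bden w = 0 /\ bnum y = 0) \/ (bnum w = 0 /\ bden y = 0).
    apply: NNPP => H; apply: Hf; split; first by rewrite /farey_adj /= w1 w2; lia.
    split; first by rewrite /= w1; lia.
    split => //=.
    by split; move=> h; apply: H; [left|right].
  have hw0 := @bden0 w.
  case: ex => [[e1 e2]|[e1 e2]].
  + have bx : bnum x = 1 by have := hw0 e1; lia.
    have byy : bden y = 1 by move: hD; rewrite bx e2; lia.
    have bxx : bden x = 1 by lia.
    have -> : y = zero by apply: vec_inj; rewrite ?e2 ?byy.
    have -> : x = one by apply: vec_inj; rewrite ?bx ?bxx.
    exact: chain_base_oz.
  + have hy0 := @bden0 y e2.
    have bx : bnum x = 1 by lia.
    have bxx : bden x = 1 by move: hD; rewrite bx e2 hy0; lia.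
    have -> : y = inf by apply: vec_inj; rewrite ?e2 ?hy0.
    have -> : x = one by apply: vec_inj; rewrite ?bx ?bxx.
    exact: T_chain_refl E_one_inf.
-
  set w := bpt (bnum y - bnum x) (bden y - bden x).
  have [w1 w2] : bnum w = bnum y - bnum x /\ bden w = bden y - bden x.
    apply: (@exact_vec _ _ (bnum x) (bden x)); try lia.
  have Tad : T_adj (x, w) (x, y).
    exists x, w, y; split; last by split; left.
    split.
    + rewrite /farey_adj w1 w2. lia.
    + exact: Ha.
    + rewrite /farey_adj w1 w2. lia.
    + move=> E; have : bnum w = bnum y by rewrite E.
      have : bden w = bden y by rewrite E.
      rewrite w1 w2; lia.
  case: (classic (EP (x, w))) => Hf.
    apply: T_chain_step (IH _ Hf _) He Tad => /=; lia.
  have ex : (bden x = 0 /\ bnum w = 0) \/ (bnum x = 0 /\ bden w = 0).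
    apply: NNPP => H; apply: Hf; split; first by rewrite /farey_adj /= w1 w2; lia.
    split => //; split; first by rewrite /= w1; lia.
    by split; move=> h; apply: H; [left|right].
  have hw0 := @bden0 w.
  case: ex => [[e1 e2]|[e1 e2]].
  + have hx0 := @bden0 x e1.
    have by1 : bnum y = 1 by lia.
    have byy : bden y = 1 by move: hD; rewrite hx0 e1 by1; lia.
    have -> : x = inf by apply: vec_inj; rewrite ?e1 ?hx0.
    have -> : y = one by apply: vec_inj; rewrite ?by1 ?byy.
    exact: chain_base_io.
  + have by1 : bnum y = 1 by have := hw0 e2; lia.
    have bxx : bden x = 1 by move: hD; rewrite e1 by1; lia.
    have byy : bden y = 1 by lia.
    have -> : x = zero by apply: vec_inj; rewrite ?e1 ?bxx.
    have -> : y = one by apply: vec_inj; rewrite ?by1 ?byy.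
    exact: chain_base_zo.
Qed.

Lemma big_t (t p : int) : 0 <= t -> 1 <= p -> t <= t * p.
Proof. move=> h1 h2; nia. Qed.

Lemma connP0 : connectedB (fun x => 0 <= bnum x).
Proof.
exists EP; split; first split.
- by move=> e [].
- have all : forall e, EP e -> T_chain EP (one, inf) e.
    move=> e He; apply: (@chain_all (absz (bnum e.1 + bden e.1 + bnum e.2 + bden e.2))) => //.
    case: He => _ [h1 [h2 _]]; have := bden_ge0 e.1; have := bden_ge0 e.2; lia.
  move=> e f He Hf.
  exact: (@chain_trans _ _ _ _ (@chain_sym _ _ _ (all _ He)) (all _ Hf)).
- move=> z; split.
  + move=> hz.
    case: (bden z =P 0) => [hz0|hzn].
      have -> : z = inf by apply: vec_inj; rewrite ?hz0 ?(@bden0 z hz0).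
      exists (one, inf); split; first exact: E_one_inf.
      by right; left.
    case: (bnum z =P 0) => [hn0|hnn].
      have -> : z = zero.
        case: z hz hzn hn0 => [r|] /= _ hzn' hn0'; last by exfalso; apply: hzn'.
        have : r == 0 by rewrite -numq_eq0 hn0'.
        by move/eqP ->.
      exists (zero, one); split; first exact: E_zero_one.
      by left.
    have hq := bden_ge0 z.
    have [r [s hrs]] := partner z.
    set p := bnum z in hz hnn hrs *. set q := bden z in hq hzn hrs *.
    set t := `|r| + `|s|.
    have ht : 0 <= t by rewrite /t; lia.
    have tp := @big_t t p ht ltac:(lia).
    have tq := @big_t t q ht ltac:(lia).
    have [y1 y2] : bnum (bpt (r + t * p) (s + t * q)) = r + t * p /\
                   bden (bpt (r + t * p) (s + t * q)) = s + t * q.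
      apply: (@exact_vec _ _ p q); try (rewrite /t in tp tq *; lia).
    exists (z, bpt (r + t * p) (s + t * q)); split; last by left.
    split.
      rewrite /farey_adj /= y1 y2 -/p -/q.
      have -> : p * (s + t * q) - (r + t * p) * q = p * s - q * r by ring.
      by rewrite hrs.
    split => //; split; first by rewrite /= y1; rewrite /t in tp *; lia.
    by split; case=> h1 h2; [apply: hzn|apply: hnn].
  + case=> [[x y]] [[Ha [h1 [h2 [n1 n2]]]]] /=.
    simpl in h1, h2, n1, n2.
    case=> [->|[->|[->|->]]] //=.
      apply: nonneg_bpt; try (have := bden_ge0 x; have := bden_ge0 y; lia).
    have hD := @adj_D _ _ Ha.
    case: (@parent _ _ _ _ h1 (bden_ge0 x) h2 (bden_ge0 y) hD n1 n2) => [[c1 c2]|[c1 c2]].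
      apply: nonneg_bpt; try lia; exact: (@adj_nz' _ _ Ha).
    apply: nonpos_bpt; try lia; exact: (@adj_nz' _ _ Ha).
Qed.


Definition Pp (x : B) : Prop := 0 <= bnum x.

Lemma connP : connectedB Pp.
Proof. exact: connP0. Qed.

Lemma pow2_gt (j : nat) : (j%:Z < 2 ^+ j :> int).
Proof.
elim: j => [|j IH] //; rewrite exprS.
have : (1 <= 2 ^+ j :> int) by lia.
lia.
Qed.

Lemma iter_cancel (f g : B -> B) (K : forall x, g (f x) = x) n x :
  iter n g (iter n f x) = x.
Proof.
elim: n x => [|n IH] x //.
by rewrite iterSr iterS K IH.
Qed.

Section Half.
Variables a b c d : int.
Hypotheses (hb : 1 <= b) (hc : 1 <= c) (ha : 0 <= a) (hd : 0 <= d)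
  (det : a * d - b * c = 1).
Let ha1 : 1 <= a. Proof. nia. Qed.
Let hd1 : 1 <= d. Proof. nia. Qed.
Let U : unimod a b c d. Proof. by left. Qed.
Let Ui : unimod d (- b) (- c) a. Proof. left; rewrite -det; ring. Qed.
Let M := mobius a b c d.
Let Mi := mobius d (- b) (- c) a.
Let K1 x : Mi (M x) = x.
Proof. apply: mob_inv => //; first [ring | rewrite -det; ring]. Qed.
Let K2 x : M (Mi x) = x.
Proof. apply: mob_inv => //; first [ring | rewrite -det; ring]. Qed.

Lemma P_vec y : Pp y -> 0 <= bnum y /\ 0 <= bden y /\ 1 <= bnum y + bden y.
Proof.
rewrite /Pp => H; have := bden_ge0 y; have := @bden0 y.
case: (bden y =P 0) => [E|E] h1 h2; first by rewrite h1 //; lia.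
lia.
Qed.

Lemma M_vec y : Pp y ->
  bnum (M y) = a * bnum y + b * bden y /\ bden (M y) = c * bnum y + d * bden y.
Proof.
move=> /P_vec [h1 [h2 h3]].
have [e [He [E1 E2]]] := @vec_mob _ _ _ _ y U.
have := bden_ge0 (M y); rewrite -/M in E1 E2.
case: He => He; subst e; first by rewrite !mul1r in E1 E2.
move=> h4; exfalso; nia.
Qed.

Lemma M_pos y : Pp y -> 0 < bnum (M y) /\ 0 < bden (M y).
Proof.
move=> Py; have [-> ->] := @M_vec _ Py; have := @P_vec _ Py; nia.
Qed.

Lemma M_P y : Pp y -> Pp (M y).
Proof. by move=> /M_pos [h _]; rewrite /Pp; lia. Qed.

Definition sz (y : B) := bnum y + bden y.

Lemma no_back x : ~ (forall j, Pp (iter j Mi x)).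
Proof.
move=> H.
have step : forall j, 2 * sz (iter j.+1 Mi x) <= sz (iter j Mi x).
  move=> j; have E : iter j Mi x = M (iter j.+1 Mi x) by rewrite /= K2.
  rewrite [in X in _ <= X]E /sz.
  have [-> ->] := @M_vec _ (H j.+1).
  have := @P_vec _ (H j.+1); nia.
have bound : forall j, 2 ^+ j * sz (iter j Mi x) <= sz x.
  elim=> [|j IH]; first by rewrite expr0 mul1r.
  have := step j; rewrite exprS.
  have := @P_vec _ (H j); move: IH; rewrite /sz => IH. have p0 : (0 <= 2 ^+ j :> int) by apply: exprn_ge0. nia.
have := bound `|sz x|%N; have := @P_vec _ (H `|sz x|%N).
have := pow2_gt `|sz x|%N. rewrite /sz.
have := @P_vec _ (H 0%N). rewrite /=. nia.
Qed.

Lemma eventually x : exists p0, Pp (iter p0 M x).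
Proof.
apply: NNPP => H.
have H' : forall j, ~ Pp (iter j M x) by move=> j Hj; apply: H; exists j.
have neg : forall y, ~ Pp y -> bnum y < 0 /\ 0 < bden y.
  move=> y; rewrite /Pp => Hy; have := bden_ge0 y; have := @bden0 y.
  case: (bden y =P 0) => [E|E] h1 h2; first by exfalso; apply: Hy; rewrite h1.
  lia.
pose s y := bden y - bnum y.
have step : forall j, 2 * s (iter j.+1 M x) <= s (iter j M x).
  move=> j; have E : iter j M x = Mi (iter j.+1 M x) by rewrite /= K1.
  have [n1 n2] := neg _ (H' j.+1).
  have [e [He [E1 E2]]] := @vec_mob _ _ _ _ (iter j.+1 M x) Ui.
  rewrite -/Mi -E in E1 E2.
  have := bden_ge0 (iter j M x).
  rewrite /s; case: He => ?; subst e; nia.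
have bound : forall j, 2 ^+ j * s (iter j M x) <= s x.
  elim=> [|j IH]; first by rewrite expr0 mul1r.
  have := step j; rewrite exprS.
  have := neg _ (H' j); move: IH; rewrite /s => IH. have p0 : (0 <= 2 ^+ j :> int) by apply: exprn_ge0. nia.
have := bound `|s x|%N; have := neg _ (H' `|s x|%N).
have := pow2_gt `|s x|%N. rewrite /s.
have := neg _ (H' 0%N). rewrite /=. nia.
Qed.

Lemma stay x p0 : Pp (iter p0 M x) -> forall p, (p0 <= p)%N -> Pp (iter p M x).
Proof.
move=> H p /subnK <-; elim: (p - p0)%N => [|k IH]; first by rewrite add0n.
by rewrite addSn /=; apply: M_P.
Qed.

Lemma eventually_list (K : seq B) : exists m, forall x, x \in K -> forall p, (m <= p)%N -> Pp (iter p M x).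
Proof.
elim: K => [|x K [m Hm]]; first by exists 0%N.
have [p0 Hp0] := eventually x.
exists (maxn m p0) => y; rewrite inE => /orP [/eqP ->|yK] p Hp.
  apply: (@stay _ _ Hp0); apply: leq_trans Hp; exact: leq_maxr.
apply: Hm => //; apply: leq_trans Hp; exact: leq_maxl.
Qed.

Lemma half_vs : exists V : nat -> B -> Prop,
  (forall n, connectedB (V n)) /\ vanishing M V /\
  (forall z, V 0%N z -> 0 < bnum z /\ 0 < bden z).
Proof.
exists (fun n z => Pp (iter n.+1 Mi z)); split; last split.
- elim=> [|n IH].
    by apply: (@conn_mob d (- b) (- c) a a b c d) => //; exact: connP.
  have -> : (fun z => Pp (iter n.+2 Mi z)) = (fun z => Pp (iter n.+1 Mi (Mi z))).
    by apply: functional_extensionality => z; rewrite iterSr.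
  by apply: (@conn_mob d (- b) (- c) a a b c d (fun y => Pp (iter n.+1 Mi y))) => //.
- split.
  + move=> n; exists (iter n.+1 M None); rewrite iter_cancel //.
  + move=> n x; rewrite iterS => H.
    by rewrite -[iter n.+1 Mi x]K2; apply: M_P.
  + move=> x H; apply: (@no_back (Mi x)) => j.
    by rewrite -iterSr; apply: H.
  + move=> K n; have [m Hm] := eventually_list K.
    exists (n.+1 + m)%N; split => // x xK.
    rewrite iterD iter_cancel //; apply: Hm => //.
- move=> z /= H; rewrite -[z]K2; exact: M_pos.
Qed.
End Half.


Lemma base_goal a b c d : 1 <= b -> 1 <= c -> 0 <= a -> 0 <= d ->
  a * d - b * c = 1 -> Goal a b c d.
Proof.
move=> hb hc ha hd det.
have [V1 [C1 [W1 P1]]] := @half_vs _ _ _ _ hb hc ha hd det.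
have det2 : d * a - b * c = 1 by rewrite -det; ring.
have [V2 [C2 [W2 P2]]] := @half_vs _ _ _ _ hb hc hd ha det2.
have UJ : unimod 1 0 0 (-1) by right; ring.
have KJ : forall x, mobius 1 0 0 (-1) (mobius 1 0 0 (-1) x) = x.
  by move=> x; apply: mob_inv => //; ring.
have U2 : unimod d b c a by left.
exists V1, (fun n z => V2 n (mobius 1 0 0 (-1) z)).
split => //; split.
  by move=> n; apply: (@conn_mob 1 0 0 (-1) 1 0 0 (-1)).
split => //; split.
  apply: (@vanish_tr _ _ _ _ _ KJ KJ _ W2) => x.
  rewrite [in RHS]mob_comp //; rewrite [in RHS]mob_comp //.
  apply: mob_ext; ring.
move=> x [/P1 [h1 h2] /P2 [h3 h4]].
have [e [He [E1 E2]]] := @vec_mob _ _ _ _ x UJ.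
move: E1 E2; case: He => ->; lia.
Qed.

Lemma find_k (e c : int) : c != 0 -> exists k, (2 * c * k - e) ^+ 2 <= c ^+ 2.
Proof.
move=> cn.
have c2 : 2 * c != 0 by rewrite mulf_eq0 negb_or cn.
have E := divz_eq e (2 * c).
have r0 := modz_ge0 e c2.
have r1 := ltz_mod e c2.
set q := (e %/ (2 * c))%Z in E. set r := (e %% (2 * c))%Z in E r0 r1.
rewrite normrM in r1.
have H2 : `|2 : int| = 2 by [].
rewrite H2 in r1.
have ca : (`|c| = c /\ 0 < c) \/ (`|c| = - c /\ c < 0) by lia.
case: (lerP r `|c|) => hr.
  exists q; rewrite E.
  have -> : 2 * c * q - (q * (2 * c) + r) = - r by ring.
  rewrite !expr2; nia.
case: (ltrP 0 c) => hc.
  exists (q + 1); rewrite E.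
  have -> : 2 * c * (q + 1) - (q * (2 * c) + r) = 2 * c - r by ring.
  rewrite !expr2; nia.
exists (q - 1); rewrite E.
have -> : 2 * c * (q - 1) - (q * (2 * c) + r) = - (2 * c + r) by ring.
rewrite !expr2; nia.
Qed.

Lemma abs_lt (x y : int) : x * y < 0 -> - (x * y) < x * x -> `|y| < `|x|.
Proof. move=> h1 h2.
case: (ltrgtP x 0) => hx; last by move: h1; rewrite hx mul0r.
- case: (ltrgtP y 0) => hy; last by move: h1; rewrite hy mulr0.
  + nia.
  + rewrite (gtr0_norm hy) (ltr0_norm hx); nia.
- case: (ltrgtP y 0) => hy; last by move: h1; rewrite hy mulr0.
  + rewrite (ltr0_norm hy) (gtr0_norm hx); nia.
  + nia.
Qed.
Lemma pos_pair (x y : int) : 2 <= x * y -> 3 <= x + y -> 0 < x /\ 0 < y.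
Proof. move=> h1 h2. case: (ltrP 0 x) => hx; last by nia. nia. Qed.
Lemma sgn_pos (x y : int) : 0 < x * y -> 0 < x -> 0 < y.
Proof. move=> h1 h2; nia. Qed.
Lemma sgn_neg (x y : int) : 0 < x * y -> x <= 0 -> y < 0.
Proof. move=> h1 h2; nia. Qed.

Lemma sq9 (t : int) : 3 <= t -> 9 <= t ^+ 2.
Proof. move=> h; rewrite expr2; nia. Qed.

Lemma ad1 (a d : int) : a * d = 1 -> a + d <= 2.
Proof. move=> H; have := @unit_int a d (or_introl H); case=> E; subst a; lia. Qed.

Lemma reduction (n : nat) : forall a b c d : int, `|c| <= n%:Z ->
  a * d - b * c = 1 -> 3 <= a + d -> Goal a b c d.
Proof.
elim: n => [|n IH] a b c d hc det tr.
  have c0 : c = 0 by lia.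
  exfalso; subst c; have := @ad1 a d; lia.
have cn : c != 0 by apply/eqP => c0; subst c; have := @ad1 a d; lia.
have [k Hk] := @find_k (a - d) c cn.
have U : unimod a b c d by left.
apply: (@goal_T k _ _ _ _ U).
set a' := a - k * c. set d' := d + k * c.
set b' := b + k * (a - d) - k * k * c.
have det' : a' * d' - b' * c = 1 by rewrite /a' /d' /b' -det; ring.
have tr' : a' + d' = a + d by rewrite /a' /d'; ring.
have key : - 4 * (c * b') = (2 * c * k - (a - d)) ^+ 2 - ((a + d) ^+ 2 - 4).
  transitivity ((2 * c * k - (a - d)) ^+ 2 - ((a + d) ^+ 2 - 4) + 4 * (a * d - b * c - 1)).
    rewrite /b'; ring.
  rewrite det; ring.
have bn : b' != 0 by apply/eqP => b0; rewrite b0 in det'; have := @ad1 a' d'; lia.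
have sq : 9 <= (a + d) ^+ 2 :> int by apply: sq9.
have c2 : 0 <= c ^+ 2 by apply: sqr_ge0.
have hX : - (c * b') < c * c.
  move: key Hk sq c2; rewrite -expr2.
  move: (c * b') ((2 * c * k - (a - d)) ^+ 2) (c ^+ 2) ((a + d) ^+ 2) => X Y Z W.
  clear; lia.
case: (ltrP 0 (c * b')) => hcb.
  case: (ltrP 0 c) => hc0.
    have hb' : 0 < b' := @sgn_pos _ _ hcb hc0.
    have [pa pd] : 0 < a' /\ 0 < d' by apply: pos_pair; lia.
    apply: base_goal => //; lia.
  have hb' : b' < 0 := @sgn_neg _ _ hcb hc0.
  have [pa pd] : 0 < a' /\ 0 < d' by apply: pos_pair; lia.
  apply: goal_J; first by left.
  apply: base_goal; try lia.
have hnz : c * b' != 0 by rewrite mulf_neq0.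
have hcb' : c * b' < 0 by move: hnz hcb; move: (c * b') => X; clear; lia.
have hlt : `|b'| < `|c| := @abs_lt _ _ hcb' hX.
apply: goal_W; first by left.
apply: IH.
- lia.
- rewrite -det'; ring.
- lia.
Qed.

Theorem mainTheorem7 (a b c d : int) :
  a * d - b * c = 1 -> 2 < `|a + d| ->
  exists Up Um : nat -> B -> Prop,
    (forall n, connectedB (Up n)) /\ (forall n, connectedB (Um n)) /\
    vanishing (mobius a b c d) Up /\
    vanishing (mobius d (- b) (- c) a) Um /\
    (forall x, ~ (Up 0%N x /\ Um 0%N x)).
Proof.
move=> det tr.
have [h|h] : 3 <= a + d \/ a + d <= -3 by lia.
  exact: (@reduction `|c|%N a b c d).
apply: goal_neg.
apply: (@reduction `|c|%N); try lia.
Qed.
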